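(* Let $n\ge1$, and for $j=1,\dots,n$ let $\hat\phi_j\in\mathbb{R}$, $\tilde\phi_j\ge 0$ and $0\le\underline{\xi}_j\le\overline{\xi}_j$. For $\mathbf{x}\in\mathbb{R}^n$, $\mathbf{x}\succeq\mathbf{0}$, define $$\mathcal{P}_{\mathrm R}(\mathbf{x})=\max_{\substack{\phi_j\in[\hat\phi_j-\tilde\phi_j,\,\hat\phi_j+\tilde\phi_j]\\ \xi_j\in[\underline\xi_j,\,\overline\xi_j]}}\operatorname{tr}\Big\{\Big(\sum_{j=1}^n x_j\xi_j\mathbf{u}(\phi_j)\mathbf{u}(\phi_j)^{\mathsf T}\Big)^{-1}\Big\}$$ (the trace being $+\infty$ when the matrix is singular), $\underline{\mathbf{R}}=\operatorname{diag}\{\underline\xi_1,\dots,\underline\xi_n\}$ and $B(\mathbf{x})=\tfrac14\,\mathcal{P}_{\mathrm R}(\mathbf{x})\cdot\mathbf{1}^{\mathsf T}\underline{\mathbf{R}}\mathbf{x}$. For a positive integer $M$, let $\vartheta_m=(2m+1)\pi/M$ for $m\in\mathcal{M}=\{0,\dots,M-1\}$, let $[\mathbf{h}_m]_j=\max_{|\epsilon|\le2\tilde\phi_j}\cos(2\hat\phi_j-\vartheta_m+\epsilon)$ and $[\mathbf{g}_m]_j=[\mathbf{h}_m]_j/\cos(\pi/M)$, and $$\underline{\mathcal{P}}_M(\mathbf{x})=\max_{m\in\mathcal{M}}\frac{4\cdot\mathbf{1}^{\mathsf T}\underline{\mathbf{R}}\mathbf{x}}{(\mathbf{1}^{\mathsf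 T}\underline{\mathbf{R}}\mathbf{x})^2-(\mathbf{h}_m^{\mathsf T}\underline{\mathbf{R}}\mathbf{x})^2},\qquad \overline{\mathcal{P}}_M(\mathbf{x})=\max_{m\in\mathcal{M}}\frac{4\cdot\mathbf{1}^{\mathsf T}\underline{\mathbf{R}}\mathbf{x}}{(\mathbf{1}^{\mathsf T}\underline{\mathbf{R}}\mathbf{x})^2-(\mathbf{g}_m^{\mathsf T}\underline{\mathbf{R}}\mathbf{x})^2}.$$ Then for any $\mathbf{x}\succeq\mathbf{0}$ with $\mathcal{P}_{\mathrm R}(\mathbf{x})<\infty$ and any $M\ge\pi\sqrt{B(\mathbf{x})}$, $$\overline{\mathcal{P}}_M(\mathbf{x})\le(1+C_M)\,\underline{\mathcal{P}}_M(\mathbf{x}),\qquad C_M=\frac{\sin^2(\pi/M)\,(B(\mathbf{x})-1)}{1-\sin^2(\pi/M)\,B(\mathbf{x})}.$$ Moreover, $C_M$ is monotonically decreasing in $M$ and $\lim_{M\to\infty}C_M/M^{-2}=\pi^2(B(\mathbf{x})-1)$.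
   Context: $\mathbf{u}(\phi)=[\cos\phi\ \ \sin\phi]^{\mathsf T}$; $\mathbf{1}$ is the all-ones vector; $\mathbf{x}\succeq\mathbf{0}$ means entrywise nonnegative. This models one agent (with one uncertainty cell) in a wireless localization network with $n$ anchors: angles $\phi_j$ known to lie in $[\hat\phi_j-\tilde\phi_j,\hat\phi_j+\tilde\phi_j]$, equivalent ranging coefficients $\xi_j$ known to lie in $[\underline\xi_j,\overline\xi_j]$, and $\mathbf{x}$ the anchor transmit power vector. *)

(* Defs.v *)
From HB Require Import structures.
From mathcomp Require Import all_boot all_order all_algebra.
From mathcomp Require Import all_classical all_reals all_analysis.
Set Implicit Arguments. Unset Strict Implicit. Unset Printing Implicit Defensive.
Import Order.TTheory GRing.Theory Num.Theory.
Import numFieldNormedType.Exports.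
Local Open Scope classical_set_scope.
Local Open Scope ring_scope.

Section Defs.
Variable R : realType.
Variable n : nat.

Definition uvec (phi : R) : 'cV[R]_2 :=
  \col_(i < 2) (if i == ord0 then cos phi else sin phi).

Definition Jmat (x phi xi : 'I_n -> R) : 'M[R]_2 :=
  \sum_(j < n) (x j * xi j) *: (uvec (phi j) *m (uvec (phi j))^T).

Definition trinv (J : 'M[R]_2) : \bar R :=
  if J \in unitmx then ((\tr (invmx J))%:E)%E else (+oo)%E.

Definition P_R (phihat phitil xilo xiup x : 'I_n -> R) : \bar R :=
  ereal_sup [set r : \bar R | exists phi xi : 'I_n -> R,
     (forall j, phi j \in `[phihat j - phitil j, phihat j + phitil j])
     /\ (forall j, xi j \in `[xilo j, xiup j])
     /\ r = trinv (Jmat x phi xi)].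

Definition oneRx (xilo x : 'I_n -> R) : R := \sum_(j < n) xilo j * x j.

(* B(x) = 1/4 P_R(x) 1^T Rlow x  (meaningful when P_R(x) is finite) *)
Definition Bx (phihat phitil xilo xiup x : 'I_n -> R) : R :=
  4^-1 * fine (P_R phihat phitil xilo xiup x) * oneRx xilo x.

Definition theta (M m : nat) : R := (2 * m%:R + 1) * pi / M%:R.

Definition hvec (phihat phitil : 'I_n -> R) (M m : nat) (j : 'I_n) : R :=
  sup [set cos (2 * phihat j - theta M m + e) | e in `[- (2 * phitil j), 2 * phitil j]].

Definition gvec (phihat phitil : 'I_n -> R) (M m : nat) (j : 'I_n) : R :=
  hvec phihat phitil M m j / cos (pi / M%:R).

Definition quadratio (xilo x v : 'I_n -> R) : R :=
  4 * oneRx xilo x / (oneRx xilo x ^+ 2 - (\sum_(j < n) v j * xilo j * x j) ^+ 2).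

Definition maxM (M : nat) (f : nat -> R) : R :=
  \big[Num.max/f 0%N]_(m < M) f m.

Definition Plow (phihat phitil xilo x : 'I_n -> R) (M : nat) : R :=
  maxM M (fun m => quadratio xilo x (hvec phihat phitil M m)).

Definition Pup (phihat phitil xilo x : 'I_n -> R) (M : nat) : R :=
  maxM M (fun m => quadratio xilo x (gvec phihat phitil M m)).

Definition CM (B : R) (M : nat) : R :=
  (sin (pi / M%:R)) ^+ 2 * (B - 1) / (1 - (sin (pi / M%:R)) ^+ 2 * B).

End Defs.

(* Main.v *)
Require Import Defs.
From HB Require Import structures.
From mathcomp Require Import all_boot all_order all_algebra.
From mathcomp Require Import all_classical all_reals all_analysis.
From mathcomp Require Import ring lra.
Import Order.TTheory GRing.Theory Num.Theory.
Import numFieldNormedType.Exports.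
Local Open Scope classical_set_scope.
Local Open Scope ring_scope.

Lemma cvg_pi_div {R : realType} : (fun M : nat => pi / M%:R : R) @ \oo --> 0.
Proof.
apply/cvgrPdist_lt => e e0; near=> M.
rewrite distrC subr0.
have M0 : (0:R) < M%:R.
  apply: (lt_le_trans _ (_ : pi / e <= _)); first by rewrite divr_gt0 // pi_gt0.
  by near: M; apply: nbhs_infty_ger.
rewrite ger0_norm ?divr_ge0 ?pi_ge0 ?ltW //.
rewrite ltr_pdivrMr // mulrC -ltr_pdivrMr //.
apply: (lt_le_trans _ (_ : pi / e + 1 <= _)); first by rewrite ltrDl.
by near: M; apply: nbhs_infty_ger.
Unshelve. all: end_near. Qed.
Lemma sin_bounds {R : realType} (x : R) : 0 < x <= pi / 2 ->
  x * cos x <= sin x /\ sin x < x.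
Proof.
move=> /andP[x0 xpi].
have xpi' : x <= pi.
  apply: (le_trans xpi); rewrite ler_pdivrMr // ler_peMr ?pi_ge0 //.
  by rewrite ler1n.
have [c /itvP cI E] := @MVT R sin cos 0 x x0 (fun y _ => is_derive_sin y)
   (continuous_subspaceT (@continuous_sin R)).
rewrite sin0 !subr0 in E; rewrite E.
have c0 : 0 < c by rewrite cI.
have cx : c < x by rewrite cI.
have c0I : c \in `[0, pi] by rewrite in_itv /= ltW //= (le_trans (ltW cx)).
have x0I : x \in `[0, pi] by rewrite in_itv /= ltW.
have z0I : (0:R) \in `[0, pi] by rewrite in_itv /= lexx pi_ge0.
split.
  rewrite mulrC ler_pM2r //; rewrite leNgt ltr_cos //; by rewrite -leNgt ltW.
rewrite gtr_pMl // -cos0 ltr_cos //.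
Qed.

Lemma cvg_CM {R : realType} (B : R) :
  (fun M : nat => CM B M / (M%:R ^-2)) @ \oo --> pi ^+ 2 * (B - 1).
Proof.
have hu := @cvg_pi_div R.
have hs : (fun M : nat => sin (pi / M%:R) : R) @ \oo --> 0.
  rewrite -[X in _ --> X]sin0.
  exact: (cvg_comp _ _ hu (@continuous_sin R 0)).
have hc : (fun M : nat => cos (pi / M%:R) : R) @ \oo --> (1:R).
  by have := cvg_comp _ _ hu (@continuous_cos R 0); rewrite cos0.
have ht : (fun M : nat => M%:R * sin (pi / M%:R) : R) @ \oo --> pi.
  apply: (@squeeze_cvgr _ _ _ _ (fun M : nat => pi * cos (pi / M%:R))
     (fun _ => pi)); last exact: cvg_cst.
    exists 2%N => // M /= M2.
    have M0 : (0:R) < M%:R by rewrite ltr0n; case: M M2.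
    have hx : 0 < (pi : R) / M%:R <= pi / 2.
      apply/andP; split; first by rewrite divr_gt0 ?pi_gt0.
      rewrite ler_pdivrMr // mulrC mulrA mulrAC ler_peMl ?pi_ge0 //.
      by rewrite ler_pdivlMr // mul1r ler_nat.
    have [h1 h2] := @sin_bounds _ _ hx.
    apply/andP; split.
      by rewrite -(ler_pM2l M0) mulrA mulrCA divff ?gt_eqF // mulr1 in h1.
    by rewrite -(ltr_pM2l M0) mulrCA divff ?gt_eqF // mulr1 in h2; exact: ltW.
  rewrite -[X in _ --> X]mulr1; apply: cvgMl_tmp => //.
set g := (fun M : nat => (M%:R * sin (pi / M%:R)) * (M%:R * sin (pi / M%:R)) * (B - 1)
     * (1 - sin (pi / M%:R) * sin (pi / M%:R) * B)^-1).
suff H : g @ \oo --> pi ^+ 2 * (B - 1).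
  apply: cvg_trans H; apply: near_eq_cvg; near=> M.
  rewrite /g /CM invrK; set t := (_ ^-1); ring.
have h1 : (fun M : nat => (M%:R * sin (pi / M%:R)) * (M%:R * sin (pi / M%:R)) * (B - 1))
   @ \oo --> pi * pi * (B - 1).
  by apply: cvgMr_tmp; apply: cvgM.
have h2 : (fun M : nat => 1 - sin (pi / M%:R) * sin (pi / M%:R) * B) @ \oo --> 1 - 0 * 0 * B.
  apply: cvgB; first exact: cvg_cst.
  by apply: cvgMr_tmp; apply: cvgM.
rewrite mul0r mul0r subr0 in h2.
have h3 : (fun M : nat => (1 - sin (pi / M%:R) * sin (pi / M%:R) * B)^-1) @ \oo --> (1:R)^-1.
  by apply: cvgV => //; exact: oner_neq0.
have := cvgM h1 h3; rewrite invr1 mulr1 -expr2; exact.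
Unshelve. all: end_near. Qed.

Lemma sB_lt1 {R : realType} (B : R) (M : nat) : 0 <= B -> (0 < M)%N ->
  pi * Num.sqrt B <= M%:R -> sin (pi / M%:R) ^+ 2 * B < 1.
Proof.
move=> B0 M0 hM.
case: M M0 hM => // -[_ _|M _ hM]; first by rewrite divr1 sinpi expr0n mul0r ltr01.
have Mp : (0:R) < M.+2%:R by rewrite ltr0n.
have hx : 0 < (pi : R) / M.+2%:R <= pi / 2.
  apply/andP; split; first by rewrite divr_gt0 ?pi_gt0.
  rewrite ler_pdivrMr // mulrC mulrA mulrAC ler_peMl ?pi_ge0 //.
  by rewrite ler_pdivlMr // mul1r ler_nat.
have [_ h2] := @sin_bounds _ _ hx.
have s0 : 0 <= sin ((pi:R) / M.+2%:R).
  apply: sin_ge0_pi; apply/andP; split; first by rewrite divr_ge0 ?pi_ge0 // ltW.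
  by rewrite ler_pdivrMr // ler_peMr ?pi_ge0 // ler1n.
have hB : ((pi:R) / M.+2%:R) ^+ 2 * B <= 1.
  have := hM; rewrite -(ler_pM2r Mp) => _.
  have h3 : (pi * Num.sqrt B) ^+ 2 <= M.+2%:R ^+ 2.
    by rewrite ler_sqr ?nnegrE ?mulr_ge0 ?pi_ge0 ?sqrtr_ge0 // ltW.
  rewrite exprMn sqr_sqrtr // in h3.
  rewrite expr_div_n mulrAC ler_pdivrMr ?exprn_gt0 // mul1r.
  exact: h3.
case: (eqVneq B 0) => [->|Bn0]; first by rewrite mulr0 ltr01.
have Bp : 0 < B by rewrite lt_neqAle eq_sym Bn0.
apply: (lt_le_trans _ hB); rewrite ltr_pM2r //.
have xp : 0 < (pi:R) / M.+2%:R by case/andP: hx.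
rewrite !expr2; apply: (le_lt_trans (ler_wpM2l s0 (ltW h2))).
by rewrite ltr_pM2r.
Qed.

Lemma M_ge2 {R : realType} (B : R) (M : nat) : 1 <= B ->
  pi * Num.sqrt B <= M%:R -> (2 <= M)%N.
Proof.
move=> B1 hM.
have s1 : 1 <= Num.sqrt B by rewrite -(sqrtr1 R) ler_wsqrtr.
have : (2:R) <= M%:R.
  apply: (le_trans _ hM); rewrite -[2]mulr1.
  by apply: ler_pM => //; exact: pi_ge2.
by rewrite ler_nat.
Qed.

Lemma CM_mono {R : realType} (B : R) (M1 M2 : nat) : 1 <= B -> (0 < M1)%N ->
  pi * Num.sqrt B <= M1%:R -> (M1 <= M2)%N -> CM B M2 <= CM B M1.
Proof.
move=> B1 M10 hM le12.
have M12 := @M_ge2 _ _ _ B1 hM.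
have lt1 := @sB_lt1 _ _ _ (le_trans ler01 B1) M10 hM.
have hM1 : (0:R) < M1%:R by rewrite ltr0n.
have hM2 : (0:R) < M2%:R by rewrite ltr0n (leq_trans M10).
have x1 : 0 < (pi:R) / M1%:R <= pi / 2.
  apply/andP; split; first by rewrite divr_gt0 ?pi_gt0.
  rewrite ler_pdivrMr // mulrC mulrA mulrAC ler_peMl ?pi_ge0 //.
  by rewrite ler_pdivlMr // mul1r ler_nat.
have x21 : (pi:R) / M2%:R <= pi / M1%:R.
  by rewrite ler_pM2l ?pi_gt0 // lef_pV2 ?posrE // ler_nat.
have x2 : 0 < (pi:R) / M2%:R <= pi / 2.
  apply/andP; split; first by rewrite divr_gt0 ?pi_gt0.
  by apply: le_trans x21 _; case/andP: x1.
have I1 : (pi:R) / M1%:R \in `[- (pi / 2), pi / 2].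
  case/andP: x1 => a b; rewrite in_itv /= b andbT.
  apply: le_trans (ltW a); rewrite oppr_le0 divr_ge0 ?pi_ge0 //.
have I2 : (pi:R) / M2%:R \in `[- (pi / 2), pi / 2].
  case/andP: x2 => a b; rewrite in_itv /= b andbT.
  apply: le_trans (ltW a); rewrite oppr_le0 divr_ge0 ?pi_ge0 //.
have s21 : sin ((pi:R) / M2%:R) <= sin (pi / M1%:R).
  by rewrite leNgt ltr_sin // -leNgt x21.
have s2 : 0 <= sin ((pi:R) / M2%:R).
  apply: sin_ge0_pi; case/andP: x2 => a b; rewrite ltW //= (le_trans b) //.
  by rewrite ler_pdivrMr // ler_peMr ?pi_ge0 // ler1n.
rewrite /CM.
set t1 := sin (pi / M1%:R) ^+ 2 in lt1 *.
set t2 := sin (pi / M2%:R) ^+ 2.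
have t21 : t2 <= t1 by rewrite /t2 /t1 ler_sqr ?nnegrE // (le_trans s2).
have d1 : 0 < 1 - t1 * B by rewrite subr_gt0.
have d2 : 0 < 1 - t2 * B.
  rewrite subr_gt0; apply: le_lt_trans lt1; apply: ler_wpM2r => //.
  exact: le_trans ler01 B1.
rewrite -subr_ge0.
have -> : t1 * (B - 1) / (1 - t1 * B) - t2 * (B - 1) / (1 - t2 * B) =
   (B - 1) * (t1 - t2) / ((1 - t1 * B) * (1 - t2 * B)).
  by field; rewrite ?gt_eqF ?d1 ?d2 // ?mulr_gt0.
by rewrite divr_ge0 ?mulr_ge0 ?subr_ge0 // ltW // -subr_gt0.
Qed.


Definition i1 : 'I_2 := lift ord0 ord0.

Lemma tr_inv2 {R : realType} (J : 'M[R]_2) : J \in unitmx ->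
  let D := J ord0 ord0 * J i1 i1 - J ord0 i1 * J i1 ord0 in
  D != 0 /\ \tr (invmx J) * D = J ord0 ord0 + J i1 i1.
Proof.
move=> uJ D.
have E := mulmxV uJ.
set K := invmx J in E *.
have e i j := congr1 (fun A : 'M[R]_2 => A i j) E.
have e1 := e ord0 ord0; have e2 := e ord0 i1; have e3 := e i1 ord0; have e4 := e i1 i1.
rewrite /= !mxE !big_ord_recl !big_ord0 /= -/i1 !addr0 in e1 e2 e3 e4.
rewrite /mxtrace !big_ord_recl !big_ord0 /= -/i1 addr0.
move: e1 e2 e3 e4; rewrite /D.
set p := J ord0 ord0; set q := J ord0 i1; set r := J i1 ord0; set t := J i1 i1.
set k00 := K ord0 ord0; set k01 := K ord0 i1; set k10 := K i1 ord0; set k11 := K i1 i1.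
move=> e1 e2 e3 e4.
have h00 : (p * t - q * r) * k00 = t.
  have -> : (p * t - q * r) * k00 = t * (p * k00 + q * k10) - q * (r * k00 + t * k10) by ring.
  by rewrite e1 e3; ring.
have h11 : (p * t - q * r) * k11 = p.
  have -> : (p * t - q * r) * k11 = p * (r * k01 + t * k11) - r * (p * k01 + q * k11) by ring.
  by rewrite e4 e2; ring.
have h01 : (p * t - q * r) * k01 = - q.
  have -> : (p * t - q * r) * k01 = t * (p * k01 + q * k11) - q * (r * k01 + t * k11) by ring.
  by rewrite e4 e2; ring.
split; last by rewrite mulrC mulrDr h00 h11 addrC.
apply/eqP => D0.
rewrite D0 mul0r in h00 h11 h01.
move: e1; rewrite -h11 -[q]opprK -h01 !mul0r oppr0 mul0r addr0.
by move/eqP; rewrite eq_sym oner_eq0.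
Qed.

Lemma Jmat_entry {R : realType} n (x phi xi : 'I_n -> R) i j :
  Jmat x phi xi i j = \sum_k x k * xi k * (uvec (phi k) i 0 * uvec (phi k) j 0).
Proof.
rewrite /Jmat summxE; apply: eq_bigr => k _; rewrite !mxE big_ord1 !mxE //.
Qed.

Lemma uvec0 {R : realType} (a : R) : uvec a ord0 0 = cos a.
Proof. by rewrite /uvec mxE. Qed.

Lemma uvec1 {R : realType} (a : R) : uvec a i1 0 = sin a.
Proof. by rewrite /uvec mxE. Qed.

Lemma lagrange2 {R : realType} n (w c s : 'I_n -> R) : (forall j, 0 <= w j) ->
  0 <= (\sum_j w j * (c j * c j)) * (\sum_j w j * (s j * s j))
       - (\sum_j w j * (c j * s j)) * (\sum_j w j * (s j * c j)).
Proof.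
move=> w0.
have E : 2 * ((\sum_j w j * (c j * c j)) * (\sum_j w j * (s j * s j))
       - (\sum_j w j * (c j * s j)) * (\sum_j w j * (s j * c j))) =
   \sum_i \sum_j w i * w j * (c i * s j - c j * s i) ^+ 2.
  rewrite !big_distrlr /=.
  have -> : \sum_i \sum_j w i * w j * (c i * s j - c j * s i) ^+ 2 =
     \sum_i \sum_j (w i * (c i * c i) * (w j * (s j * s j))) +
     \sum_i \sum_j (w j * (c j * c j) * (w i * (s i * s i))) -
     2 * \sum_i \sum_j (w i * (c i * s i) * (w j * (s j * c j))).
    rewrite mulr_sumr -big_split -sumrB; apply: eq_bigr => i _.
    rewrite mulr_sumr -big_split -sumrB; apply: eq_bigr => j _ /=. ring.
  rewrite [X in _ = _ + X - _]exchange_big /=; ring.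
have : 0 <= 2 * ((\sum_j w j * (c j * c j)) * (\sum_j w j * (s j * s j))
       - (\sum_j w j * (c j * s j)) * (\sum_j w j * (s j * c j))).
  rewrite E; apply: sumr_ge0 => i _; apply: sumr_ge0 => j _.
  by rewrite mulr_ge0 ?sqr_ge0 // mulr_ge0.
by rewrite pmulr_rge0.
Qed.

Section Jent.
Context {R : realType} (n : nat) (x phi xi : 'I_n -> R).
Lemma Jmat00 : Jmat x phi xi ord0 ord0 = \sum_k x k * xi k * (cos (phi k) * cos (phi k)).
Proof. by rewrite Jmat_entry; apply: eq_bigr => k _; rewrite uvec0. Qed.
Lemma Jmat11 : Jmat x phi xi i1 i1 = \sum_k x k * xi k * (sin (phi k) * sin (phi k)).
Proof. by rewrite Jmat_entry; apply: eq_bigr => k _; rewrite uvec1. Qed.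
Lemma Jmat01 : Jmat x phi xi ord0 i1 = \sum_k x k * xi k * (cos (phi k) * sin (phi k)).
Proof. by rewrite Jmat_entry; apply: eq_bigr => k _; rewrite uvec0 uvec1. Qed.
Lemma Jmat10 : Jmat x phi xi i1 ord0 = \sum_k x k * xi k * (sin (phi k) * cos (phi k)).
Proof. by rewrite Jmat_entry; apply: eq_bigr => k _; rewrite uvec0 uvec1. Qed.
End Jent.


Lemma hvec_attained {R : realType} n (phihat phitil : 'I_n -> R) M m j :
  0 <= phitil j -> exists e, e \in `[- (2 * phitil j), 2 * phitil j] /\
  hvec phihat phitil M m j = cos (2 * phihat j - theta R M m + e).
Proof.
move=> p0.
set f := fun e => cos (2 * phihat j - theta R M m + e).
have ab : - (2 * phitil j) <= 2 * phitil j.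
  have : 0 <= 2 * phitil j by rewrite mulr_ge0.
  lra.
have cf : {within `[- (2 * phitil j), 2 * phitil j], continuous f}.
  apply: continuous_subspaceT => z.
  apply: continuous_comp; last exact: continuous_cos.
  by apply: continuousD; [exact: cvg_cst | exact: cvg_id].
have [c cI cmax] := EVT_max ab cf.
exists c; split => //.
rewrite /hvec; apply/le_anti/andP; split.
  apply: ge_sup; first by exists (f c), c.
  by move=> y [e eI <-]; apply: cmax.
apply: ub_le_sup; last by exists c.
by exists (f c) => y [e eI <-]; apply: cmax.
Qed.

Lemma key {R : realType} n (phihat phitil xilo xiup x : 'I_n -> R) M m :
  (forall j, 0 <= phitil j) -> (forall j, 0 <= xilo j) ->
  (forall j, xilo j <= xiup j) -> (forall j, 0 <= x j) ->
  (P_R phihat phitil xilo xiup x < +oo)%E ->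
  let a := oneRx xilo x in
  let H := \sum_j hvec phihat phitil M m j * xilo j * x j in
  let p := fine (P_R phihat phitil xilo xiup x) in
  [/\ 0 < a ^+ 2 - H ^+ 2, 4 * a <= p * (a ^+ 2 - H ^+ 2),
      0 <= p & P_R phihat phitil xilo xiup x = p%:E].
Proof.
move=> pt0 xl0 xlu x0 Pfin a H p.
have /choice [e he] := fun j => @hvec_attained _ _ phihat phitil M m j (pt0 j).
pose phi j := phihat j + e j / 2.
have hphi j : phi j \in `[phihat j - phitil j, phihat j + phitil j].
  have [/[!in_itv] /= /andP[l u] _] := he j.
  rewrite /phi; apply/andP; split; lra.
have hxi j : xilo j \in `[xilo j, xiup j] by rewrite in_itv /= lexx xlu.
set J := Jmat x phi xilo.
have HJ : (trinv J <= P_R phihat phitil xilo xiup x)%E.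
  by apply: ereal_sup_ubound; exists phi, xilo.
have uJ : J \in unitmx.
  apply/negPn/negP => nu; move: HJ; rewrite /trinv (negbTE nu) leye_eq => /eqP E.
  by move: Pfin; rewrite E ltxx.
move: HJ; rewrite /trinv uJ => HJ.
have Pp : P_R phihat phitil xilo xiup x = p%:E.
  rewrite /p fineK // fin_numE; apply/andP; split.
    by apply/eqP => E; move: HJ; rewrite E leeNy_eq.
  by apply/eqP => E; move: Pfin; rewrite E ltxx.
move: HJ; rewrite Pp lee_fin => HJ.
move: (@tr_inv2 _ _ uJ) => /= [Dn0 trD].
set T := \tr (invmx J) in HJ trD.
rewrite /J Jmat00 Jmat11 Jmat01 Jmat10 in Dn0 trD.
set A := \sum_k x k * xilo k * (cos (phi k) * cos (phi k)) in Dn0 trD.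
set Bs := \sum_k x k * xilo k * (sin (phi k) * sin (phi k)) in Dn0 trD.
set C := \sum_k x k * xilo k * (cos (phi k) * sin (phi k)) in Dn0 trD.
set C' := \sum_k x k * xilo k * (sin (phi k) * cos (phi k)) in Dn0 trD.
have CC : C' = C by apply: eq_bigr => k _; rewrite [sin _ * _]mulrC.
have Ea : a = A + Bs.
  rewrite /a /oneRx /A /Bs -big_split /=; apply: eq_bigr => k _.
  by rewrite -mulrDr -!expr2 cos2Dsin2 mulr1 mulrC.
have EH : H = (A - Bs) * cos (theta R M m) + (C + C') * sin (theta R M m).
  rewrite mulrBl mulrDl !mulr_suml -sumrB -!big_split /=.
  rewrite /H; apply: eq_bigr => k _.
  have [_ ->] := he k.
  have -> : 2 * phihat k - theta R M m + e k = (phi k + phi k) - theta R M m.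
    by rewrite /phi; field.
  rewrite cosB cosD sinD; ring.
have Dge0 : 0 <= A * Bs - C * C'.
  have := @lagrange2 _ _ (fun k => x k * xilo k) (fun k => cos (phi k)) (fun k => sin (phi k))
    (fun k => mulr_ge0 (x0 k) (xl0 k)).
  by [].
rewrite CC in Dn0 trD Dge0 EH.
have Dp : 0 < A * Bs - C * C by rewrite lt_neqAle eq_sym Dn0.
have a0 : 0 <= a by apply: sumr_ge0 => k _; rewrite mulr_ge0.
set c := cos (theta R M m) in EH; set s := sin (theta R M m) in EH.
have cs : c ^+ 2 + s ^+ 2 = 1 by rewrite /c /s cos2Dsin2.
have HH : H ^+ 2 <= (A - Bs) ^+ 2 + (C + C) ^+ 2.
  have E : (A - Bs) ^+ 2 + (C + C) ^+ 2 - H ^+ 2 - ((A - Bs) * s - (C + C) * c) ^+ 2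
     = ((A - Bs) ^+ 2 + (C + C) ^+ 2) * (1 - (c ^+ 2 + s ^+ 2)) by rewrite EH; ring.
  rewrite cs subrr mulr0 in E; move/eqP: E; rewrite subr_eq0 => /eqP E.
  by rewrite -subr_ge0 E sqr_ge0.
have Hq : 4 * (A * Bs - C * C) <= a ^+ 2 - H ^+ 2.
  rewrite Ea; move: HH; set Q := H ^+ 2; nra.
have T0 : 0 <= T.
  have : 0 <= T * (A * Bs - C * C) by rewrite trD -Ea.
  by rewrite pmulr_lge0.
have p0 : 0 <= p by apply: le_trans HJ.
split => //.
- by apply: lt_le_trans Hq; rewrite mulr_gt0.
- rewrite [X in 4 * X <= _]Ea -trD.
  apply: (le_trans (_ : _ <= p * (4 * (A * Bs - C * C)))); last by rewrite ler_wpM2l.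
  by rewrite mulrCA; apply: ler_wpM2r => //; rewrite mulr_ge0 // ltW.
Qed.


Lemma le_bigmax_gen {R : realType} (idx : R) M : forall (F : nat -> R) m, (m < M)%N ->
  F m <= \big[Num.max/idx]_(i < M) F i.
Proof.
elim: M => // M IH F [|m] mM; rewrite big_ord_recl le_max ?lexx //.
by rewrite (IH (fun i => F i.+1)) ?orbT.
Qed.

Lemma le_maxM {R : realType} (f : nat -> R) M m : (m < M)%N -> f m <= maxM M f.
Proof. exact: le_bigmax_gen. Qed.

Lemma maxM_le {R : realType} (f : nat -> R) M K : (0 < M)%N ->
  (forall m, (m < M)%N -> f m <= K) -> maxM M f <= K.
Proof.
move=> M0 h; rewrite /maxM; apply: (big_ind (fun y => y <= K)).
- exact: h.
- by move=> y z hy hz; rewrite ge_max hy hz.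
- by move=> i _; apply: h.
Qed.

Lemma gsum {R : realType} n (phihat phitil xilo x : 'I_n -> R) M m :
  \sum_j gvec phihat phitil M m j * xilo j * x j =
  (\sum_j hvec phihat phitil M m j * xilo j * x j) / cos (pi / M%:R).
Proof. by rewrite mulr_suml; apply: eq_bigr => j _; rewrite /gvec; ring. Qed.

Theorem proposition6 (R : realType) (n : nat) (phihat phitil xilo xiup : 'I_n -> R) :
  (0 < n)%N ->
  (forall j, 0 <= phitil j) ->
  (forall j, 0 <= xilo j) ->
  (forall j, xilo j <= xiup j) ->
  forall x : 'I_n -> R, (forall j, 0 <= x j) ->
  (P_R phihat phitil xilo xiup x < +oo)%E ->
  let B := Bx phihat phitil xilo xiup x in
  (forall M : nat, (0 < M)%N -> pi * Num.sqrt B <= M%:R ->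
     Pup phihat phitil xilo x M <= (1 + CM B M) * Plow phihat phitil xilo x M)
  /\ (forall M1 M2 : nat, (0 < M1)%N -> pi * Num.sqrt B <= M1%:R -> (M1 <= M2)%N ->
        CM B M2 <= CM B M1)
  /\ ((fun M : nat => CM B M / (M%:R ^-2)) @ \oo --> pi ^+ 2 * (B - 1)).
Proof.
move=> n0 pt0 xl0 xlu x x0 Pfin B.
have Kgen M m := @key R n phihat phitil xilo xiup x M m pt0 xl0 xlu x0 Pfin.
have [q0 q1 p0 _] := Kgen 1%N 0%N.
set a := oneRx xilo x in q0 q1 *.
set p := fine (P_R phihat phitil xilo xiup x) in q0 q1 p0 *.
have a0 : 0 <= a by apply: sumr_ge0 => k _; rewrite mulr_ge0.
set H0 := \sum_j _ in q0 q1.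
have ap : 0 < a.
  rewrite lt_neqAle a0 andbT; apply/eqP => a00.
  move: q0; rewrite -a00 expr0n /= sub0r oppr_gt0 ltNge sqr_ge0 //.
have pp : 0 < p.
  rewrite lt_neqAle p0 andbT; apply/eqP => p00.
  by move: q1; rewrite -p00 mul0r pmulr_rle0 // leNgt ap.
have EB : B = 4^-1 * p * a by [].
have B1 : 1 <= B.
  rewrite EB.
  have : 4 * a <= p * a ^+ 2.
    apply: le_trans q1 _; rewrite ler_pM2l // lerBlDr lerDl sqr_ge0 //.
  rewrite expr2 mulrA ler_pM2r // => h.
  by rewrite -mulrA mulrC ler_pdivlMr // mul1r.
have B0 : 0 <= B by apply: le_trans B1.
split; last split.
- move=> M M0 hM.
  have sB := @sB_lt1 _ B M B0 M0 hM.
  set s := sin (pi / M%:R) in sB *.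
  set c := cos ((pi:R) / M%:R).
  have c2 : c ^+ 2 = 1 - s ^+ 2 by rewrite /c /s cos2sin2.
  have s2 : 0 <= s ^+ 2 := sqr_ge0 s.
  have s1 : s ^+ 2 < 1.
    by apply: le_lt_trans sB; rewrite ler_peMr.
  have d1 : 0 < 1 - s ^+ 2 by rewrite subr_gt0.
  have d2 : 0 < 1 - s ^+ 2 * B by rewrite subr_gt0.
  have C1 : 0 <= 1 + CM B M.
    have -> : 1 + CM B M = (1 - s ^+ 2) / (1 - s ^+ 2 * B).
      by rewrite /CM -/s; field; rewrite gt_eqF.
    by rewrite divr_ge0 // ltW.
  apply: maxM_le => // m mM.
  rewrite /quadratio gsum -/c -/a.
  have [qm0 qm1 _ _] := Kgen M m.
  rewrite -/a -/p in qm0 qm1.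
  set Hm := \sum_j _ in qm0 qm1 *.
  apply: (le_trans (_ : _ <= (1 + CM B M) * (4 * a / (a ^+ 2 - Hm ^+ 2)))).
    set q := a ^+ 2 - Hm ^+ 2 in qm0 qm1 *.
    have qB : a ^+ 2 <= q * B.
      rewrite EB; nra.
    have qs : 0 < q - s ^+ 2 * a ^+ 2.
      have Bp : 0 < B by apply: lt_le_trans B1.
      rewrite -(pmulr_lgt0 _ Bp).
      apply: (lt_le_trans (_ : 0 < a ^+ 2 * (1 - s ^+ 2 * B))).
        by rewrite mulr_gt0 // exprn_gt0.
      have E : (q - s ^+ 2 * a ^+ 2) * B - a ^+ 2 * (1 - s ^+ 2 * B) = q * B - a ^+ 2
        by ring.
      by rewrite -subr_ge0 E subr_ge0.
    have CME : CM B M = s ^+ 2 * (B - 1) / (1 - s ^+ 2 * B) by [].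
    rewrite expr_div_n c2 CME -subr_ge0.
    have -> : (1 + s ^+ 2 * (B - 1) / (1 - s ^+ 2 * B)) * (4 * a / q)
       - 4 * a / (a ^+ 2 - Hm ^+ 2 / (1 - s ^+ 2)) =
       4 * a * (1 - s ^+ 2) * s ^+ 2 * (q * B - a ^+ 2) /
       ((1 - s ^+ 2 * B) * q * (q - s ^+ 2 * a ^+ 2)).
      rewrite /q; field.
      rewrite exprMn; apply/and4P; split; rewrite gt_eqF //.
    apply: divr_ge0.
      apply: mulr_ge0; last by rewrite subr_ge0.
      apply: mulr_ge0 => //; apply: mulr_ge0; last exact: ltW d1.
      by rewrite mulr_ge0.
    by rewrite !mulr_ge0 // ltW.
  rewrite /Plow; apply: ler_wpM2l => //.
  have h := le_maxM (fun m => quadratio xilo x (hvec phihat phitil M m)) M m mM.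
  exact h.
- by move=> M1 M2 M10 hM le12; apply: CM_mono.
- exact: cvg_CM.
Qed.
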